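(* For every constant $\epsilon<\frac12$ the following holds. There is no pair of maps $g_r,g_c$, where $g_r$ assigns to each row payoff matrix $R\in[0,1]^{n\times n}$ a mixed strategy over rows and $g_c$ assigns to each pair $(R,C)$ of matrices in $[0,1]^{n\times n}$ a mixed strategy over columns, such that for every $n$ and every bimatrix game $(R,C)$ the profile $(g_r(R),g_c(R,C))$ is an $\epsilon$-approximate Nash equilibrium. In other words, with unlimited one-way communication (from the row player to the column player only) it is impossible to guarantee an $\epsilon$-approximate Nash equilibrium for any constant $\epsilon<\frac12$.
   Context: A bimatrix game $(R,C)$ has payoff matrices with entries in $[0,1]$ for the row and column player; mixed strategies $\mathbf{x},\mathbf{y}$ give payoffs $\mathbf{x}^TR\mathbf{y}$ and $\mathbf{x}^TC\mathbf{y}$. $(\mathbf{x},\mathbf{y})$ is an $\epsilon$-approximate Nash equilibrium if for all pure strategies $i$: $\mathbf{e}_i^TR\mathbf{y}\le\mathbf{x}^TR\mathbf{y}+\epsilon$ and $\mathbf{x}^TC\mathbf{e}_i\le\mathbf{x}^TC\mathbf{y}+\epsilon$. In one-way communication the row player may send information to the column player but receives none, so his output depends only on $R$, while the column player's output may depend on $C$ and on everything the row player sends (hence, with unlimited communication, on all of $R$). *)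

(* Defs.v *)
From mathcomp Require Import all_boot all_order all_algebra.
From mathcomp Require Import reals.
Set Implicit Arguments. Unset Strict Implicit. Unset Printing Implicit Defensive.
Import Order.TTheory GRing.Theory Num.Theory.
Local Open Scope ring_scope.

Definition unit_payoff (R : realType) (n : nat) (A : 'M[R]_n) : Prop :=
  forall i j, 0 <= A i j /\ A i j <= 1.

Definition mixed (R : realType) (n : nat) (x : 'cV[R]_n) : Prop :=
  (forall i, 0 <= x i 0) /\ \sum_i x i 0 = 1.

Definition eps_NE (R : realType) (n : nat) (eps : R) (A B : 'M[R]_n)
    (x y : 'cV[R]_n) : Prop :=
  (forall i, (A *m y) i 0 <= (x^T *m A *m y) 0 0 + eps) /\
  (forall j, (x^T *m B) 0 j <= (x^T *m B *m y) 0 0 + eps).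

(* Main.v *)
Require Import Defs.
From mathcomp Require Import all_boot all_order all_algebra.
From mathcomp Require Import reals ring lra.
Import Order.TTheory GRing.Theory Num.Theory.
Local Open Scope ring_scope.
Set Implicit Arguments. Unset Strict Implicit.

Section Core.
Variable R : realType.
Variables m s : nat.
Local Notation X := {set 'I_m}.

Definition w (y : X -> R) (S : X) := \sum_(k in S) y [set k].

Lemma sum_sub_le (I : finType) (A : {pred I}) (F : I -> R) :
  (forall i, 0 <= F i) -> \sum_(i in A) F i <= \sum_i F i.
Proof.
move=> F0; rewrite [X in _ <= X](bigID (mem A)) /= lerDl.
by apply: sumr_ge0 => i _.
Qed.

Lemma yh_sum (y : X -> R) : (forall T, 0 <= y T) ->
  \sum_k y [set k] <= \sum_T y T.
Proof.
move=> y0.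
have -> : \sum_k y [set k] = \sum_(T in (fun k : 'I_m => [set k]) @: [set: 'I_m]) y T.
  rewrite big_imset /=; last by move=> a b _ _; apply: set1_inj.
  by apply: eq_bigl => k; rewrite inE.
exact: sum_sub_le.
Qed.

Lemma argmax_ex (y : X -> R) (j : 'I_m) : (0 < s)%N ->
  exists T : X, [/\ (#|T| <= s)%N, j \in T &
      forall S : X, (#|S| <= s)%N -> j \in S -> w y S <= w y T].
Proof.
move=> s0.
pose P := [pred S : X | (#|S| <= s)%N && (j \in S)].
have P0 : P [set j] by apply/andP; rewrite cards1 set11.
have := @arg_maxP _ _ X [set j] P (w y) P0.
case=> T PT h3.
case/andP: PT => h1 h2.
by exists T; split=> // S a b; apply: h3; apply/andP.
Qed.

Lemma swap_bound (y : X -> R) (j : 'I_m) (T : X) :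
  (forall T, 0 <= y T) -> \sum_k y [set k] <= 1 -> (0 < s)%N ->
  (forall S : X, (#|S| <= s)%N -> j \in S -> w y S <= w y T) ->
  forall S : X, (#|S| <= s)%N -> j \notin S ->
  w y S <= w y T - y [set j] + (1 - y [set j]) / s%:R.
Proof.
move=> y0 ytot s0 hmax S hS jS.
have yh0 : forall k, 0 <= y [set k] by move=> k; apply: y0.
have wU : forall S' : X, j \notin S' -> w y (j |: S') = y [set j] + w y S'.
  by move=> S' h; rewrite /w big_setU1.
have tot : forall S' : X, j \notin S' -> w y S' + y [set j] <= 1.
  move=> S' h; rewrite addrC -wU //; apply: le_trans ytot.
  by rewrite /w; apply: sum_sub_le.
have yj1 : y [set j] <= 1.
  by have := tot set0 (negbT (in_set0 j)); rewrite /w big_set0 add0r.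
have sR : 0 < s%:R :> R by rewrite ltr0n.
move: hS; rewrite leq_eqVlt => /orP[/eqP hS | hS].
- have : (0 < #|S|)%N by rewrite hS.
  case/card_gt0P => k1 k1S.
  pose Pm := mem S.
  have := @arg_minP _ _ 'I_m k1 Pm (fun k => y [set k]) k1S.
  case=> k0 k0S hmin.
  have k0S' : k0 \in S := k0S.
  have jS' : j \notin S :\ k0 by rewrite !inE negb_and jS orbT.
  have cS' : (#|j |: (S :\ k0)| <= s)%N.
    rewrite cardsU1 jS' -hS (cardsD1 k0 S) k0S'.
    by [].
  have h1 := hmax _ cS' (setU11 _ _).
  rewrite wU // in h1.
  have eS : w y S = y [set k0] + w y (S :\ k0) by rewrite /w (big_setD1 k0).
  have lb : y [set k0] *+ #|S| <= w y S.
    rewrite /w -sumr_const; apply: ler_sum => k kS; exact: hmin.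
  rewrite hS -mulr_natr in lb.
  have := tot S jS => t.
  have hk : y [set k0] <= (1 - y [set j]) / s%:R.
    rewrite ler_pdivlMr //; lra.
  lra.
- have cS' : (#|j |: S| <= s)%N by rewrite cardsU1 jS.
  have h1 := hmax _ cS' (setU11 _ _).
  rewrite wU // in h1.
  have : 0 <= (1 - y [set j]) / s%:R by apply: divr_ge0; lra.
  lra.
Qed.

Definition Am (S T : X) : R :=
  ((#|S| <= s)%N && (T \in (fun k : 'I_m => [set k]) @: S))%:R.

Lemma rowpay (y : X -> R) (S : X) :
  \sum_T Am S T * y T = if (#|S| <= s)%N then w y S else 0.
Proof.
rewrite /Am; case: ifP => h /=.
- rewrite /w -(big_imset _ (h := fun k : 'I_m => [set k])) /=;
    last by move=> a b _ _; apply: set1_inj.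
  rewrite [RHS]big_mkcond /=; apply: eq_bigr => T _.
  by case: (T \in _); rewrite ?mul1r ?mul0r.
- by apply: big1 => T _; rewrite mul0r.
Qed.

Definition phat (x : X -> R) (j : 'I_m) :=
  \sum_S x S * ((#|S| <= s)%N && (j \in S))%:R.

Lemma yh_le (y : X -> R) (k : 'I_m) : (forall T, 0 <= y T) ->
  y [set k] <= \sum_k y [set k].
Proof.
move=> y0; rewrite (bigD1 k) //= lerDl; apply: sumr_ge0 => i _; exact: y0.
Qed.

Lemma regret_bound (x y : X -> R) (j : 'I_m) (T : X) :
  (forall S, 0 <= x S) -> \sum_S x S = 1 ->
  (forall T, 0 <= y T) -> \sum_k y [set k] <= 1 -> (0 < s)%N ->
  (forall S : X, (#|S| <= s)%N -> j \in S -> w y S <= w y T) ->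
  (y [set j] - (1 - y [set j]) / s%:R) * (1 - phat x j) <=
  w y T - \sum_S x S * (if (#|S| <= s)%N then w y S else 0).
Proof.
move=> x0 xs y0 ytot s0 hmax.
set c := (y [set j] - (1 - y [set j]) / s%:R).
have yj1 : y [set j] <= 1 by apply: le_trans ytot; apply: yh_le.
have sR : 0 < s%:R :> R by rewrite ltr0n.
have cpos : 0 <= (1 - y [set j]) / s%:R by apply: divr_ge0; lra.
have e1 : c * (1 - phat x j) =
    \sum_S x S * (c * (1 - ((#|S| <= s)%N && (j \in S))%:R)).
  rewrite -{1}xs /phat -sumrB mulr_sumr; apply: eq_bigr => S _.
  by ring.
have e2 : w y T - \sum_S x S * (if (#|S| <= s)%N then w y S else 0) =
    \sum_S x S * (w y T - (if (#|S| <= s)%N then w y S else 0)).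
  rewrite [RHS](eq_bigr (fun S => x S * w y T -
      x S * (if (#|S| <= s)%N then w y S else 0))); last first.
    by move=> S _; rewrite mulrBr.
  by rewrite sumrB -mulr_suml xs mul1r.
rewrite e1 e2; apply: ler_sum => S _; apply: ler_wpM2l; first exact: x0.
case: (boolP (#|S| <= s)%N) => hS /=.
- case: (boolP (j \in S)) => jS /=.
  + rewrite subrr mulr0 subr_ge0; exact: hmax.
  + have := swap_bound y0 ytot s0 hmax hS jS.
    rewrite /c; lra.
- have := hmax [set j] _ (set11 j); rewrite cards1 => /(_ s0).
  rewrite /w big_set1 /c; lra.
Qed.

Lemma choose_j (x : X -> R) (k1 : 'I_m) :
  (forall S, 0 <= x S) -> \sum_S x S = 1 ->
  exists j, m%:R * phat x j <= s%:R.
Proof.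
move=> x0 xs.
have := @arg_minP _ _ 'I_m k1 predT (phat x) isT.
case=> j _ hmin; exists j.
have h1 : m%:R * phat x j <= \sum_(k : 'I_m) phat x k.
  have <- : \sum_(k < m) phat x j = m%:R * phat x j.
    by rewrite sumr_const card_ord mulr_natl.
  by apply: ler_sum => k _; exact: hmin.
apply: le_trans h1 _.
rewrite /phat exchange_big /=.
have -> : (s%:R : R) = \sum_S x S * s%:R by rewrite -mulr_suml xs mul1r.
apply: ler_sum => S _.
rewrite -mulr_sumr; apply: ler_wpM2l; first exact: x0.
case: (boolP (#|S| <= s)%N) => hS /=.
- have -> : \sum_(i < m) (i \in S)%:R = #|S|%:R :> R.
    rewrite -sum1_card natr_sum [RHS]big_mkcond /=; apply: eq_bigr => i _; by case: (i \in S).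
  by rewrite ler_nat.
- by rewrite big1 // ler0n.
Qed.

End Core.
Lemma arith (R : realType) (eps Y p q c d s m : R) :
  eps < 1/2 -> d = 1 - 2 * eps -> 1 <= Y + eps -> Y <= 1 -> 0 <= p ->
  m * p <= s -> 0 < s -> 0 < m -> 1 < s * d -> 2 * s < m * d ->
  q * s = 1 - Y -> c = Y - q -> c * (1 - p) <= eps -> False.
Proof.
move=> he hd h1 h2 hp hmp hs hm hsd hmd hq hc hr.
have q0 : 0 <= q by nra.
have q2 : 2 * q < d by nra.
have p2 : 2 * p < d by nra.
have cp : c * p <= p by nra.
nra.
Qed.

Section Transport.
Variable R : realType.
Variable X : finType.
Variable N : nat.
Hypothesis eN : #|X| = N.+1.
Definition e (i : 'I_N.+1) : X := enum_val (cast_ord (esym eN) i).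
Definition einv (S : X) : 'I_N.+1 := cast_ord eN (enum_rank S).
Lemma eK : cancel einv e.
Proof. by move=> S; rewrite /e /einv cast_ordK enum_rankK. Qed.
Lemma einvK : cancel e einv.
Proof. by move=> i; rewrite /e /einv enum_valK cast_ordKV. Qed.

Lemma sum_reidx (F : 'I_N.+1 -> R) : \sum_i F i = \sum_(S : X) F (einv S).
Proof.
rewrite (reindex einv) //; exists e => S _; [exact: eK | exact: einvK].
Qed.

Definition tmx (M : X -> X -> R) : 'M[R]_N.+1 := \matrix_(i, j) M (e i) (e j).

Lemma mulv (M : X -> X -> R) (v : 'cV[R]_N.+1) i :
  (tmx M *m v) i 0 = \sum_U M (e i) U * v (einv U) 0.
Proof.
rewrite mxE sum_reidx; apply: eq_bigr => U _; by rewrite mxE eK.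
Qed.

Lemma mulu (M : X -> X -> R) (u : 'cV[R]_N.+1) k :
  (u^T *m tmx M) 0 k = \sum_S u (einv S) 0 * M S (e k).
Proof.
rewrite mxE sum_reidx; apply: eq_bigr => S _; by rewrite !mxE eK.
Qed.

Lemma muluv (M : X -> X -> R) (u v : 'cV[R]_N.+1) :
  (u^T *m tmx M *m v) 0 0 =
  \sum_S u (einv S) 0 * \sum_U M S U * v (einv U) 0.
Proof.
rewrite mxE sum_reidx.
under eq_bigr => U _ do rewrite mulu eK mulr_suml.
rewrite exchange_big /=; apply: eq_bigr => S _.
rewrite mulr_sumr; apply: eq_bigr => U _; by rewrite mulrA.
Qed.

End Transport.

Theorem theorem3 (R : realType) (eps : R) :
  eps < 1 / 2 ->
  ~ exists (gr : forall n : nat, 'M[R]_n.+1 -> 'cV[R]_n.+1)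
           (gc : forall n : nat, 'M[R]_n.+1 -> 'M[R]_n.+1 -> 'cV[R]_n.+1),
      forall (n : nat) (A B : 'M[R]_n.+1),
        unit_payoff A -> unit_payoff B ->
        [/\ mixed (gr n A), mixed (gc n A B) & eps_NE eps A B (gr n A) (gc n A B)].
Proof.
move=> heps [gr [gc H]].
set d := 1 - 2 * eps.
have d0 : 0 < d by rewrite /d; lra.
pose s := Num.bound (1 / d).
have hs : 1 / d < s%:R by apply: archi_boundP; rewrite divr_ge0 // ltW.
have hsd : 1 < s%:R * d by rewrite -ltr_pdivrMr.
have s0 : (0 < s)%N.
  by rewrite -(ltr0n R); apply: lt_trans hs; rewrite divr_gt0.
pose m' := Num.bound (2 * s%:R / d).
have hm : 2 * s%:R / d < m'%:R.
  apply: archi_boundP; apply: divr_ge0; last exact: ltW.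
  by apply: mulr_ge0; [lra | exact: ler0n].
pose m := m'.+1.
have hmd : 2 * s%:R < m%:R * d.
  rewrite -ltr_pdivrMr //; apply: lt_le_trans hm _; by rewrite ler_nat.
pose X := {set 'I_m}.
have cX : (0 < #|X|)%N by apply/card_gt0P; exists set0.
pose N := #|X|.-1.
have eN : #|X| = N.+1 by rewrite prednK.
pose A' := tmx eN (Am R s).
have uA : unit_payoff A'.
  move=> i j; rewrite /A' /tmx mxE /Am; case: (_ && _); split; rewrite /= ?ler01 ?lexx //.
have u0 : unit_payoff (0 : 'M[R]_N.+1) by move=> i j; rewrite mxE; lra.
have [[x0' xs'] _ _] := H N A' 0 uA u0.
pose x (S : X) := gr N A' (einv eN S) 0.
have x0 : forall S, 0 <= x S by move=> S; exact: x0'.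
have xs : \sum_S x S = 1 by rewrite -xs' (sum_reidx eN).
have [j hj] := choose_j s (ord0 : 'I_m) x0 xs.
pose B' := tmx eN (fun (S T : X) => (T == [set j])%:R : R).
have uB : unit_payoff B'.
  move=> i k; rewrite /B' /tmx mxE; case: (_ == _); split; rewrite /= ?ler01 ?lexx //.
have [_ [y0' ys'] [hrow hcol]] := H N A' B' uA uB.
pose y (T : X) := gc N A' B' (einv eN T) 0.
have y0 : forall T, 0 <= y T by move=> T; exact: y0'.
have ys : \sum_T y T = 1 by rewrite -ys' (sum_reidx eN).
have ytot : \sum_k y [set k] <= 1 by rewrite -ys; exact: yh_sum.
have hY : 1 <= y [set j] + eps.
  have := hcol (einv eN [set j]).
  rewrite mulu muluv eK eqxx.
  under eq_bigr => S _ do rewrite mulr1.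
  rewrite -/x xs.
  under eq_bigr => S _ do under eq_bigr => U _ do rewrite -/(y U).
  have hin : forall S, x S * \sum_U (U == [set j])%:R * y U = x S * y [set j].
    move=> S; congr (_ * _); rewrite (bigD1 [set j]) //= eqxx mul1r big1 ?addr0 //.
    by move=> U /negbTE ->; rewrite mul0r.
  by rewrite (eq_bigr _ (fun S _ => hin S)) -mulr_suml xs mul1r.
have [T [hT1 hT2 hmax]] := argmax_ex y j s0.
have hr := hrow (einv eN T).
rewrite mulv muluv eK in hr.
have e1 : \sum_U Am R s T U * gc N A' B' (einv eN U) 0 = w y T.
  by rewrite (rowpay s y T) hT1.
rewrite e1 in hr.
have e2 : \sum_S gr N A' (einv eN S) 0 *
     \sum_U Am R s S U * gc N A' B' (einv eN U) 0 =
   \sum_S x S * (if (#|S| <= s)%N then w y S else 0).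
  by apply: eq_bigr => S _; rewrite (rowpay s y S).
rewrite e2 in hr.
have hreg := regret_bound x0 xs y0 ytot s0 hmax.
have Y1 : y [set j] <= 1 by apply: le_trans ytot; exact: yh_le.
have p0 : 0 <= phat s x j.
  by apply: sumr_ge0 => S _; apply: mulr_ge0; [exact: x0 | exact: ler0n].
have hs0 : 0 < s%:R :> R by rewrite ltr0n.
apply: (@arith R eps (y [set j]) (phat s x j) ((1 - y [set j]) / s%:R)
  (y [set j] - (1 - y [set j]) / s%:R) d s%:R m%:R) => //.
- by rewrite divfK // gt_eqF.
- apply: le_trans hreg _; lra.
Qed.
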